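(* For $n\ge 0$ let $L_n$ be the lattice consisting of a bottom element $\perp$, a top element $\top$, and $n$ pairwise incomparable elements $a_1,\dots,a_n$ with $\perp<a_i<\top$ for all $i$ (so $L_0$ is the two-element chain and $L_1$ is the three-element chain). Then $|\mathrm{Tr}(L_n)|=2^{n+1}+n$. Furthermore, for $n\ge 1$, the lattice $\mathrm{Tr}(L_n)$ is the disjoint union of three subsets $B$, $M$, $T$, where $B\cong[1]^n$ and $T\cong[1]^n$ as subposets (Boolean lattices on $n$ atoms), $M$ has $n$ elements, and the covering relations of $\mathrm{Tr}(L_n)$ are exactly those internal to $B$, those internal to $T$, and the following: (i) there is a bijection between the $n$ elements of $B$ covered by $\max B$ and the elements of $M$, and each element of $M$ covers exactly its corresponding element of $B$; (ii) there is a bijection between the $n$ elements of $T$ covering $\min T$ and the elements of $M$, and each such element of $T$ covers exactly its corresponding element of $M$; (iii) $\min T$ covers $\max B$. Explicitly, $B$ consists of the transfer systems whose non-reflexive relations form a subset of $\{\perp\,R\,a_i\}$; $T$ consists of those containing all $\perp\,R\,a_i$, $\perp\,R\,\top$, and a subset of $\{a_i\,R\,\top\}$; $M$ consists of, for each $i$, the transfer system whose non-reflexive relations are $a_i\,R\,\top$ and $\perp\,R\,a_j$ for all $j\ne i$.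
   Context: For a finite lattice $(P,\le)$, a transfer system on $P$ is a partial order $R$ on $P$ refining $\le$ (i.e. $x\,R\,y\Rightarrow x\le y$) that is closed under restriction: if $x\,R\,z$ and $y\le z$ then $(x\wedge y)\,R\,y$. $\mathrm{Tr}(P)$ denotes the set of transfer systems on $P$, partially ordered by inclusion of relations ($R\le R'$ iff $x\,R\,y\Rightarrow x\,R'\,y$); it is a finite lattice. *)

(* Defs.v *)
From mathcomp Require Import all_boot.
Set Implicit Arguments. Unset Strict Implicit. Unset Printing Implicit Defensive.

(* A relation on P is a finite set of pairs; (x, y) \in R means x R y.     *)
Section Transfer.
Variables (P : finType) (le : rel P) (meet : P -> P -> P).

Definition is_transfer (R : {set P * P}) : bool :=
  [&& [forall x, (x, x) \in R],
      [forall x, forall y, ((x, y) \in R) && ((y, x) \in R) ==> (x == y)],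
      [forall x, forall y, forall z,
          ((x, y) \in R) && ((y, z) \in R) ==> ((x, z) \in R)],
      [forall x, forall y, ((x, y) \in R) ==> le x y]
    & [forall x, forall y, forall z,
          ((x, z) \in R) && le y z ==> ((meet x y, y) \in R)]].

Definition Tr : {set {set P * P}} := [set R | is_transfer R].

End Transfer.

Definition coverIn (T : finType) (S : {set {set T}}) (R R' : {set T}) : bool :=
  [&& R \in S, R' \in S, R \proper R' &
      [forall R'' in S, ~~ ((R \proper R'') && (R'' \proper R'))]].

(* None = bottom, Some None = top, Some (Some i) = a_i *)
Definition Ln (n : nat) : finType := option (option 'I_n).
Definition botL {n} : Ln n := None.
Definition topL {n} : Ln n := Some None.
Definition atL {n} (i : 'I_n) : Ln n := Some (Some i).

Definition leLn {n} (x y : Ln n) : bool :=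
  match x, y with
  | None, _ => true
  | _, Some None => true
  | Some (Some i), Some (Some j) => i == j
  | _, _ => false
  end.

Definition meetLn {n} (x y : Ln n) : Ln n :=
  if leLn x y then x else if leLn y x then y else botL.

Definition TrLn (n : nat) : {set {set Ln n * Ln n}} := Tr (@leLn n) (@meetLn n).

Definition isAtomL {n} (x : Ln n) : bool :=
  if x is Some (Some _) then true else false.

Definition Bset (n : nat) : {set {set Ln n * Ln n}} :=
  [set R in TrLn n |
     [forall p in R, (p.1 != p.2) ==> (p.1 == botL) && isAtomL p.2]].

Definition Tset (n : nat) : {set {set Ln n * Ln n}} :=
  [set R in TrLn n |
     [&& [forall i, (botL, atL i) \in R], (botL, topL) \in R &
         [forall p in R, (p.1 != p.2) ==>
             ((p.1 == botL) && (p.2 != botL)) || (isAtomL p.1 && (p.2 == topL))]]].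

Definition Mi (n : nat) (i : 'I_n) : {set Ln n * Ln n} :=
  [set p | [|| p.1 == p.2, p == (atL i, topL) |
               [exists j, (j != i) && (p == (botL, atL j))]]].

Definition Mset (n : nat) : {set {set Ln n * Ln n}} := [set Mi i | i : 'I_n].

(* Main.v *)
Require Import Defs.
From mathcomp Require Import all_boot.
Set Implicit Arguments. Unset Strict Implicit. Unset Printing Implicit Defensive.

Section Work.
Variable n : nat.
Implicit Types (S U A : {set 'I_n}) (R : {set Ln n * Ln n}).

Definition encb S (b : bool) U (x y : Ln n) : bool :=
  (x == y) || match x, y with
   | None, Some (Some j) => j \in S
   | None, Some None => b
   | Some (Some i), Some None => i \in U
   | _, _ => false end.
Definition enc S b U : {set Ln n * Ln n} := [set p | encb S b U p.1 p.2].

Lemma in_enc S (b : bool) U x y : ((x,y) \in enc S b U) = encb S b U x y.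
Proof. by rewrite inE. Qed.

Lemma enc_sub S (b : bool) U S' (b' : bool) U' :
  (enc S b U \subset enc S' b' U') = [&& S \subset S', b ==> b' & U \subset U'].
Proof.
apply/idP/idP.
- move/subsetP=> H; apply/and3P; split.
  + by apply/subsetP=> i Hi; have := H (botL, atL i); rewrite !in_enc /encb /= Hi; apply.
  + by apply/implyP=> hb; have := H (botL, topL); rewrite !in_enc /encb /= hb; apply.
  + by apply/subsetP=> i Hi; have := H (atL i, topL); rewrite !in_enc /encb /= Hi; apply.
- case/and3P=> h1 h2 h3; apply/subsetP=> -[x y]; rewrite !in_enc /encb.
  case: eqP => //= _.
  case: x => [[i|]|]; case: y => [[j|]|] //.
  + exact: (subsetP h3).
  + exact: (subsetP h1).
  + exact: (implyP h2).
Qed.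

Lemma enc_inj S (b : bool) U S' (b' : bool) U' : enc S b U = enc S' b' U' -> [/\ S = S', b = b' & U = U'].
Proof.
move=> E.
have : enc S b U \subset enc S' b' U' by rewrite E.
rewrite enc_sub => /and3P [a1 a2 a3].
have : enc S' b' U' \subset enc S b U by rewrite E.
rewrite enc_sub => /and3P [b1 b2 b3].
split; first by apply/eqP; rewrite eqEsubset a1.
- by move: a2 b2; clear; case: b; case: b'.
- by apply/eqP; rewrite eqEsubset a3.
Qed.

Lemma trP R : R \in TrLn n ->
  [/\ forall x, (x,x) \in R,
      forall x y z, (x,y) \in R -> (y,z) \in R -> (x,z) \in R,
      forall x y, (x,y) \in R -> leLn x y &
      forall x y z, (x,z) \in R -> leLn y z -> (meetLn x y, y) \in R].
Proof.
rewrite inE => /and5P [/forallP h1 _ /forallP h3 /forallP h4 /forallP h5]; split.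
- by [].
- move=> x y z a b; have /forallP/(_ y)/forallP/(_ z)/implyP := h3 x; apply.
  by rewrite a b.
- by move=> x y a; have /forallP/(_ y)/implyP := h4 x; apply.
- move=> x y z a b; have /forallP/(_ y)/forallP/(_ z)/implyP := h5 x; apply.
  by rewrite a b.
Qed.

Lemma meet_at (i j : 'I_n) : i != j -> meetLn (atL i) (atL j) = botL.
Proof. by move=> h; rewrite /meetLn /= (negbTE h) eq_sym (negbTE h). Qed.

Lemma enc_tr S (b : bool) U : (b -> forall j, j \in S) ->
  (forall i j, i \in U -> j != i -> j \in S) ->
  (forall i, i \in U -> i \in S -> b) -> enc S b U \in TrLn n.
Proof.
move=> hb hU hUS; rewrite inE; apply/and5P; split.
- by apply/forallP=> x; rewrite in_enc /encb eqxx.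
- apply/forallP=> x; apply/forallP=> y; apply/implyP; rewrite !in_enc /encb.
  case: (eqVneq x y) => // _ /=.
  by case: x => [[i|]|]; case: y => [[j|]|] //; rewrite andbF.
- apply/forallP=> x; apply/forallP=> y; apply/forallP=> z; apply/implyP.
  rewrite !in_enc /encb.
  case: (eqVneq x y) => [<-|nxy] /=; first by rewrite ?eqxx //= => /andP[].
  case: (eqVneq y z) => [<-|nyz] /=; first by rewrite andbT => ->; rewrite orbT.
  case: (eqVneq x z) => // nxz /=.
  clear nxy nyz nxz.
  case: x => [[i|]|]; case: y => [[j|]|]; case: z => [[k|]|] //=;
    try by case/andP.
  by case/andP=> h1 h2; apply: hUS h2 h1.
- apply/forallP=> x; apply/forallP=> y; apply/implyP; rewrite !in_enc /encb.
  case: (eqVneq x y) => [->|nxy] /=; first by case: y => [[j|]|] //=.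
  by case: x nxy => [[i|]|]; case: y => [[j|]|].
- apply/forallP=> x; apply/forallP=> y; apply/forallP=> z; apply/implyP.
  move=> /andP[hxz le]; rewrite !in_enc /encb in hxz *.
  case: x hxz => [[i|]|]; case: y le => [[j|]|]; case: z => [[k|]|] //=;
    rewrite /meetLn /= ?eqxx //=.
  - by move=> /eqP <-; rewrite orbF => /eqP [->]; rewrite !eqxx.
  - move=> _ hi; case: (eqVneq i j) => [->|nij]; first by rewrite !eqxx.
    by rewrite /botL /= (hU i j hi) ?orbT // eq_sym.
  - by move=> /eqP ->.
  - by move=> _ /hb.
Qed.



Definition Bf A := enc A false set0.
Definition Tg A := enc setT true A.
Definition Mf (i : 'I_n) := enc (~: [set i]) false [set i].
Definition Uof R := [set i | (atL i, topL) \in R].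
Definition Sof R := [set j | (botL, atL j) \in R].

Lemma Bf_tr A : Bf A \in TrLn n.
Proof. by apply: enc_tr => [//| i j | i]; rewrite inE. Qed.
Lemma Tg_tr A : Tg A \in TrLn n.
Proof. by apply: enc_tr => [_ j| i j _ _| i _ _]; rewrite ?inE. Qed.
Lemma Mf_tr i : Mf i \in TrLn n.
Proof.
apply: enc_tr => [//||].
- by move=> k j; rewrite !inE => /eqP -> ->.
- by move=> k; rewrite !inE => /eqP ->; rewrite eqxx.
Qed.

Lemma Mi_eq i : Mi i = Mf i.
Proof.
apply/setP=> -[x y]; rewrite in_enc /encb !inE /=.
case: (eqVneq x y) => [->|nxy] //=.
case: x nxy => [[k|]|]; case: y => [[j|]|] //= _.
all: rewrite /atL /topL /botL ?xpair_eqE /= ?andbF ?orbF ?inE ?orFb.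
all: try by apply/existsP => -[j0 /andP[_ /eqP E]]; congruence.
- rewrite eqxx andbT.
  case: (eqVneq k i) => [->|nki]; first by rewrite eqxx.
  have -> : (Some (Some k) == Some (Some i) :> Ln n) = false.
    by apply/eqP => -[E]; rewrite E eqxx in nki.
  by apply/existsP => -[j0 /andP[_ /eqP E]]; congruence.
- apply/existsP/idP => [[j0 /andP[nj /eqP [->]]]| nj] //.
  by exists j; rewrite nj eqxx.
Qed.



Lemma Uof_enc S b U : Uof (enc S b U) = U.
Proof. by apply/setP=> i; rewrite inE in_enc /encb. Qed.

Lemma tr_enc R : R \in TrLn n ->
  R = enc (Sof R) ((botL, topL) \in R) (Uof R).
Proof.
case/trP=> refl _ le _; apply/setP=> -[x y]; rewrite in_enc /encb.
case: (eqVneq x y) => [<-|nxy] /=; first exact: refl.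
case: x nxy => [[i|]|]; case: y => [[j|]|] //= nxy; rewrite ?inE //;
  apply/negP => /le //=.
by move=> /eqP eij; rewrite eij eqxx in nxy.
Qed.

Lemma classify R : R \in TrLn n ->
  [\/ exists A, R = Bf A, exists i, R = Mf i | exists A, R = Tg A].
Proof.
move=> HR; have E := tr_enc HR; case/trP: HR => _ tr _ rs.
case hb: ((botL, topL) \in R).
- apply: Or33; exists (Uof R); rewrite {1}E hb /Tg; congr enc.
  apply/setP=> j; rewrite !inE.
  by have := rs botL (atL j) topL hb isT.
- case: (set_0Vmem (Uof R)) => [U0 | [i Hi]].
  + by apply: Or31; exists (Sof R); rewrite {1}E hb U0.
  + have HS : forall k j, k \in Uof R -> j != k -> j \in Sof R.
      move=> k j; rewrite !inE => hk njk.
      have := rs (atL k) (atL j) topL hk isT.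
      by rewrite meet_at // eq_sym.
    have niS : forall k, k \in Uof R -> k \notin Sof R.
      move=> k hk; apply/negP; rewrite inE => hs.
      by rewrite inE in hk; rewrite (tr _ _ _ hs hk) in hb.
    apply: Or32; exists i; rewrite {1}E hb /Mf.
    have UE : Uof R = [set i].
      apply/setP=> k; rewrite !inE; apply/idP/idP => [hk|/eqP ->].
      * apply/negPn/negP => nki.
        have his : i \in Sof R by apply: (HS k i); rewrite ?inE // eq_sym.
        by have := niS i Hi; rewrite his.
      * by rewrite inE in Hi.
    rewrite UE; congr enc; apply/setP=> j; rewrite !inE.
    case: (eqVneq j i) => [->|nji] /=.
    * by apply/negbTE; have := niS i Hi; rewrite inE.
    * by have := HS i j Hi nji; rewrite inE.
Qed.


Lemma subBB A A' : (Bf A \subset Bf A') = (A \subset A').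
Proof. by rewrite /Bf enc_sub sub0set /= !andbT. Qed.
Lemma subBM A i : (Bf A \subset Mf i) = (A \subset ~: [set i]).
Proof. by rewrite /Bf /Mf enc_sub sub0set /= !andbT. Qed.
Lemma subBT A U : (Bf A \subset Tg U).
Proof. by rewrite /Bf /Tg enc_sub sub0set subsetT. Qed.
Lemma subMB i A : (Mf i \subset Bf A) = false.
Proof. by rewrite /Bf /Mf enc_sub sub1set inE /= !andbF. Qed.
Lemma subMM i j : (Mf i \subset Mf j) = (i == j).
Proof.
rewrite /Mf enc_sub sub1set inE /=.
by case: (eqVneq i j) => [->|]; rewrite ?subxx ?andbF.
Qed.
Lemma subMT i U : (Mf i \subset Tg U) = (i \in U).
Proof. by rewrite /Mf /Tg enc_sub sub1set subsetT. Qed.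
Lemma subTB U A : (Tg U \subset Bf A) = false.
Proof. by rewrite /Bf /Tg enc_sub /= andbF. Qed.
Lemma subTM U i : (Tg U \subset Mf i) = false.
Proof. by rewrite /Mf /Tg enc_sub /= andbF. Qed.
Lemma subTT U U' : (Tg U \subset Tg U') = (U \subset U').
Proof. by rewrite /Tg enc_sub subsetT. Qed.

Lemma Bf_inj : injective Bf.
Proof. by move=> A A' /enc_inj []. Qed.
Lemma Tg_inj : injective Tg.
Proof. by move=> A A' /enc_inj []. Qed.
Lemma Mf_inj : injective Mf.
Proof. by move=> i j /enc_inj [_ _ /set1_inj]. Qed.

Lemma inB R : R \in Bset n <-> exists A, R = Bf A.
Proof.
split.
- rewrite inE => /andP[HT /forallP H].
  case: (classify HT) => [//|[i E]|[A E]].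
  + have := H (atL i, topL); rewrite E in_enc /encb /= inE eqxx /=.
    by [].
  + by have := H (botL, topL); rewrite E in_enc /encb /=.
- case=> A ->; rewrite inE Bf_tr /=; apply/forallP=> -[x y]; apply/implyP.
  rewrite in_enc /encb /=; case: (eqVneq x y) => //= _ H.
  by case: x H => [[i|]|]; case: y => [[j|]|]; rewrite ?inE.
Qed.

Lemma inT R : R \in Tset n <-> exists A, R = Tg A.
Proof.
split.
- rewrite inE => /andP[HT /and3P[_ H _]].
  case: (classify HT) => [[A E]|[i E]|//].
  + by move: H; rewrite E in_enc /encb /=.
  + by move: H; rewrite E in_enc /encb /=.
- case=> A ->; rewrite inE Tg_tr /=; apply/and3P; split.
  + by apply/forallP=> i; rewrite in_enc /encb /= in_setT.
  + by rewrite /Tg in_enc /encb /=.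
  + apply/forallP=> -[x y]; apply/implyP.
    rewrite in_enc /encb /=; case: (eqVneq x y) => //= _ H.
    by case: x H => [[i|]|]; case: y => [[j|]|].
Qed.

Lemma inM R : R \in Mset n <-> exists i, R = Mf i.
Proof.
split.
- by case/imsetP=> i _ ->; exists i; rewrite Mi_eq.
- by case=> i ->; rewrite -Mi_eq; apply: imset_f.
Qed.


Lemma BTr R : R \in Bset n -> R \in TrLn n.
Proof. by rewrite inE => /andP[]. Qed.
Lemma TTr R : R \in Tset n -> R \in TrLn n.
Proof. by rewrite inE => /andP[]. Qed.

Lemma TrE : TrLn n = Bset n :|: Mset n :|: Tset n.
Proof.
apply/setP=> R; rewrite !in_setU; apply/idP/idP.
- move=> HR; case: (classify HR) => [[A E]|[i E]|[A E]].
  + by have -> : R \in Bset n by apply/inB; exists A.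
  + have -> : R \in Mset n by apply/inM; exists i.
    by rewrite orbT.
  + have -> : R \in Tset n by apply/inT; exists A.
    by rewrite orbT.
- case/orP=> [/orP[/BTr //|/inM[i ->]]|/TTr //]; exact: Mf_tr.
Qed.

Lemma disjBM : [disjoint Bset n & Mset n].
Proof.
rewrite -setI_eq0; apply/eqP/setP=> R; rewrite in_setI in_set0.
apply/negP => /andP[/inB[A ->] /inM[i E]].
have : Mf i \subset Bf A by rewrite -E subxx.
by rewrite subMB.
Qed.

Lemma disjBT : [disjoint Bset n & Tset n].
Proof.
rewrite -setI_eq0; apply/eqP/setP=> R; rewrite in_setI in_set0.
apply/negP => /andP[/inB[A ->] /inT[U E]].
have : Tg U \subset Bf A by rewrite -E subxx.
by rewrite subTB.
Qed.

Lemma disjMT : [disjoint Mset n & Tset n].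
Proof.
rewrite -setI_eq0; apply/eqP/setP=> R; rewrite in_setI in_set0.
apply/negP => /andP[/inM[i ->] /inT[U E]].
have : Tg U \subset Mf i by rewrite -E subxx.
by rewrite subTM.
Qed.

Lemma BsetE : Bset n = [set Bf A | A : {set 'I_n}].
Proof.
apply/setP=> R; apply/idP/imsetP.
- by case/inB=> A ->; exists A.
- by case=> A _ ->; apply/inB; exists A.
Qed.

Lemma TsetE : Tset n = [set Tg A | A : {set 'I_n}].
Proof.
apply/setP=> R; apply/idP/imsetP.
- by case/inT=> A ->; exists A.
- by case=> A _ ->; apply/inT; exists A.
Qed.

Lemma card_sets : #|[set: {set 'I_n}]| = 2 ^ n.
Proof. by rewrite -powersetT card_powerset cardsT card_ord. Qed.

Lemma Mi_inj : injective (@Mi n).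
Proof. by move=> i j; rewrite !Mi_eq => /Mf_inj. Qed.

Lemma card_M : #|Mset n| = n.
Proof. by rewrite card_imset ?cardsT ?card_ord //; exact: Mi_inj. Qed.

Lemma card_Tr : #|TrLn n| = 2 ^ n.+1 + n.
Proof.
rewrite TrE cardsU (disjoint_setI0 (_ : [disjoint _ & _])); last first.
  rewrite -setI_eq0; apply/eqP/setP=> R; rewrite in_setI in_setU in_set0.
  apply/negP => /andP[/orP[hB|hM] hT].
  + by move: disjBT; rewrite -setI_eq0 => /eqP/setP/(_ R); rewrite in_setI hB hT in_set0.
  + by move: disjMT; rewrite -setI_eq0 => /eqP/setP/(_ R); rewrite in_setI hM hT in_set0.
rewrite cards0 subn0 cardsU disjoint_setI0 ?disjBM // cards0 subn0.
rewrite card_M BsetE TsetE (card_imset _ (@Bf_inj)) (card_imset _ (@Tg_inj)).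
by rewrite -cardsT card_sets expnS mul2n -addnn addnAC.
Qed.


Lemma coverP (S : {set {set Ln n * Ln n}}) R R' : coverIn S R R' <->
  [/\ R \in S, R' \in S, R \proper R' &
      forall R'', R'' \in S -> R \proper R'' -> R'' \proper R' -> False].
Proof.
rewrite /coverIn; split.
- case/and4P=> a b c /forallP d; split => // R'' h1 h2 h3.
  by have := d R''; rewrite h1 h2 h3.
- case=> a b c d; apply/and4P; split => //; apply/forallP=> R''.
  apply/implyP=> h1; apply/negP=> /andP[h2 h3]; exact: d h1 h2 h3.
Qed.

Definition sig R := Bf (~: Uof R).
Definition tau R := Tg (Uof R).

Lemma setT_sub_C1 (i : 'I_n) : (setT \subset ~: [set i]) = false.
Proof. by apply/negP=> /subsetP/(_ i); rewrite !inE eqxx => /(_ isT). Qed.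

Lemma sig_inj : {in Mset n &, injective sig}.
Proof.
move=> R1 R2 /inM[i ->] /inM[j ->]; rewrite /sig /Mf !Uof_enc.
by move=> /Bf_inj/setC_inj/set1_inj ->.
Qed.

Lemma tau_inj : {in Mset n &, injective tau}.
Proof.
move=> R1 R2 /inM[i ->] /inM[j ->]; rewrite /tau /Mf !Uof_enc.
by move=> /Tg_inj/set1_inj ->.
Qed.

Lemma sigE : sig @: Mset n = [set R | coverIn (Bset n) R (Bf setT)].
Proof.
apply/setP=> R; rewrite inE; apply/imsetP/idP.
- case=> R' /inM[i ->] ->; rewrite /sig /Mf Uof_enc.
  apply/coverP; split.
  + by apply/inB; eexists.
  + by apply/inB; eexists.
  + by rewrite properE !subBB subsetT setT_sub_C1.
  + move=> R'' /inB[A ->]; rewrite !properE !subBB subsetT /=.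
    case/andP=> h1 h2 h3; case/negP: h3.
    apply/subsetP=> k _; case: (eqVneq k i) => [->|nki].
    * case/subsetPn: h2 => x xA; rewrite !inE negbK => /eqP <-; exact: xA.
    * by apply: (subsetP h1); rewrite !inE nki.
- case/coverP=> /inB[A ->] _ pr nomid.
  move: pr; rewrite properE !subBB subsetT /= => /subsetPn[i _ niA].
  have sA : A \subset ~: [set i].
    apply/subsetP=> k kA; rewrite !inE; apply/eqP=> eki.
    by rewrite -eki kA in niA.
  case: (eqVneq A (~: [set i])) => [EA|nA].
  + exists (Mf i); first by apply/inM; exists i.
    by rewrite /sig /Mf Uof_enc EA.
  + exfalso; apply: (nomid (Bf (~: [set i]))).
    * by apply/inB; eexists.
    * by rewrite properEneq subBB sA andbT; apply/eqP=> /Bf_inj E; rewrite E eqxx in nA.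
    * by rewrite properE !subBB subsetT setT_sub_C1.
Qed.

Lemma tauE : tau @: Mset n = [set R | coverIn (Tset n) (Tg set0) R].
Proof.
apply/setP=> R; rewrite inE; apply/imsetP/idP.
- case=> R' /inM[i ->] ->; rewrite /tau /Mf Uof_enc.
  apply/coverP; split.
  + by apply/inT; eexists.
  + by apply/inT; eexists.
  + by rewrite properE !subTT sub0set sub1set in_set0 /=. 
  + move=> R'' /inT[U ->]; rewrite !properE !subTT sub0set /=.
    move=> h1 /andP[h2 h3]; case/negP: h3.
    case/subsetPn: h1 => x xU _; move: (subsetP h2 x xU); rewrite inE => /eqP Ex.
    by rewrite sub1set -Ex.
- case/coverP=> _ /inT[U ->] pr nomid.
  move: pr; rewrite properE !subTT sub0set /= => /subsetPn[i iU _].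
  case: (eqVneq U [set i]) => [EU|nU].
  + exists (Mf i); first by apply/inM; exists i.
    by rewrite /tau /Mf Uof_enc EU.
  + exfalso; apply: (nomid (Tg [set i])).
    * by apply/inT; eexists.
    * by rewrite properE !subTT sub0set sub1set in_set0.
    * rewrite properEneq subTT sub1set iU andbT.
      by apply/eqP=> /Tg_inj E; rewrite E eqxx in nU.
Qed.


Lemma cover_iff R R' :
  coverIn (TrLn n) R R' <->
  (coverIn (Bset n) R R' \/ coverIn (Tset n) R R' \/
   (R' \in Mset n /\ R = sig R') \/ (R \in Mset n /\ R' = tau R) \/
   (R = Bf setT /\ R' = Tg set0)).
Proof.
split.
- case/coverP=> hR hR' pr nomid.
  case: (classify hR) => [[A EA]|[i EA]|[U EA]];
  case: (classify hR') => [[A' EA']|[j EA']|[U' EA']]; subst R R'.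
  + left; apply/coverP; split; [by apply/inB; eexists|by apply/inB; eexists|exact: pr|].
    by move=> R'' /BTr; apply: nomid.
  + right; right; left; split; first by apply/inM; exists j.
    rewrite /sig /Mf Uof_enc; congr Bf.
    move: pr; rewrite properE subBM subMB andbT => sA.
    case: (eqVneq A (~: [set j])) => [//|nA]; exfalso.
    apply: (nomid (Bf (~: [set j]))); first exact: Bf_tr.
    * by rewrite properEneq subBB sA andbT; apply/eqP=> /Bf_inj E; rewrite E eqxx in nA.
    * by rewrite properE subBM subMB subxx.
  + right; right; right; right.
    case: (eqVneq A setT) => [EA|nA]; last first.
      exfalso; apply: (nomid (Bf setT)); first exact: Bf_tr.
      * by rewrite properEneq subBB subsetT andbT; apply/eqP=> /Bf_inj E; rewrite E eqxx in nA.
      * by rewrite properE subBT subTB.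
    case: (eqVneq U' set0) => [EU|nU]; first by rewrite EA EU.
    exfalso; apply: (nomid (Tg set0)); first exact: Tg_tr.
    * by rewrite properE subBT subTB.
    * by rewrite properEneq subTT sub0set andbT; apply/eqP=> /Tg_inj E; rewrite -E eqxx in nU.
  + by move: pr; rewrite properE subMB.
  + by move: pr; rewrite properE !subMM; case: (eqVneq i j).
  + right; right; right; left; split; first by apply/inM; exists i.
    rewrite /tau /Mf Uof_enc; congr Tg.
    move: pr; rewrite properE subMT subTM andbT => iU.
    case: (eqVneq U' [set i]) => [//|nU]; exfalso.
    apply: (nomid (Tg [set i])); first exact: Tg_tr.
    * by rewrite properE subMT subTM inE eqxx.
    * rewrite properEneq subTT sub1set iU andbT.
      by apply/eqP=> /Tg_inj E; rewrite E eqxx in nU.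
  + by move: pr; rewrite properE subTB.
  + by move: pr; rewrite properE subTM.
  + right; left; apply/coverP; split; [by apply/inT; eexists|by apply/inT; eexists|exact: pr|].
    by move=> R'' /TTr; apply: nomid.
- case=> [|[|[|[]]]].
  + case/coverP=> hR hR' pr nomid; apply/coverP; split; try exact: BTr.
    - exact: pr.
    move=> R'' hR''; case/inB: hR' => A' EA'; subst R'.
    case: (classify hR'') => [[A EA]|[j EA]|[U EA]]; subst R''.
    * by apply: nomid; apply/inB; eexists.
    * by move=> _; rewrite properE subMB.
    * by move=> _; rewrite properE subTB.
  + case/coverP=> hR hR' pr nomid; apply/coverP; split; try exact: TTr.
    - exact: pr.
    move=> R'' hR''; case/inT: hR => U EU; subst R.
    case: (classify hR'') => [[A EA]|[j EA]|[U' EA]]; subst R''.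
    * by rewrite properE subTB.
    * by rewrite properE subTM.
    * by apply: nomid; apply/inT; eexists.
  + case=> /inM[i ->] ->; rewrite /sig /Mf Uof_enc -/(Mf i).
    apply/coverP; split; [exact: Bf_tr|exact: Mf_tr| |].
    * by rewrite properE subBM subMB subxx.
    move=> R'' hR''; case: (classify hR'') => [[A EA]|[j EA]|[U EA]]; subst R''.
    * rewrite !properE !subBB subBM subMB andbT.
      by case/andP=> _ /negP h /h.
    * by rewrite !properE !subMM; case: (eqVneq j i).
    * by move=> _; rewrite properE subTM.
  + case=> /inM[i ->] ->; rewrite /tau /Mf Uof_enc -/(Mf i).
    apply/coverP; split; [exact: Mf_tr|exact: Tg_tr| |].
    * by rewrite properE subMT subTM inE eqxx.
    * move=> R'' hR''; case: (classify hR'') => [[A EA]|[j EA]|[U EA]]; subst R''.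
      - by rewrite properE subMB.
      - by rewrite !properE !subMM; case: (eqVneq i j).
      - rewrite !properE subMT subTM !subTT sub1set /= => /andP[iU _].
        by rewrite iU andbF.
  + case=> -> ->; apply/coverP; split; [exact: Bf_tr|exact: Tg_tr| |].
    * by rewrite properE subBT subTB.
    * move=> R'' hR''; case: (classify hR'') => [[A EA]|[j EA]|[U EA]]; subst R''.
      - by rewrite properE !subBB subsetT /= andbF.
      - by rewrite properE subBM setT_sub_C1.
      - by rewrite !properE !subTT sub0set andbF.
Qed.

End Work.

Theorem proposition5p2 :
  (forall n : nat, #|TrLn n| = 2 ^ n.+1 + n) /\
  (forall n : nat, 0 < n ->
     TrLn n = Bset n :|: Mset n :|: Tset n /\
     [disjoint Bset n & Mset n] /\ [disjoint Bset n & Tset n] /\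
     [disjoint Mset n & Tset n] /\
     #|Mset n| = n /\
     exists (f g : {set 'I_n} -> {set Ln n * Ln n})
            (sigma tau : {set Ln n * Ln n} -> {set Ln n * Ln n}),
       injective f /\ [set f A | A : {set 'I_n}] = Bset n /\
       (forall A A', (f A \subset f A') = (A \subset A')) /\
       injective g /\ [set g A | A : {set 'I_n}] = Tset n /\
       (forall A A', (g A \subset g A') = (A \subset A')) /\
       {in Mset n &, injective sigma} /\
       sigma @: Mset n = [set R | coverIn (Bset n) R (f setT)] /\
       {in Mset n &, injective tau} /\
       tau @: Mset n = [set R | coverIn (Tset n) (g set0) R] /\
       (forall R R' : {set Ln n * Ln n},
          coverIn (TrLn n) R R' <->
          (coverIn (Bset n) R R' \/
           coverIn (Tset n) R R' \/
           (R' \in Mset n /\ R = sigma R') \/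
           (R \in Mset n /\ R' = tau R) \/
           (R = f setT /\ R' = g set0)))).
Proof.
split; first exact: card_Tr.
move=> n _.
do 5 (split; first by [exact: TrE|exact: disjBM|exact: disjBT|exact: disjMT|exact: card_M]).
exists (@Bf n), (@Tg n), (@sig n), (@tau n).
split; first exact: Bf_inj.
split; first by rewrite BsetE.
split; first exact: subBB.
split; first exact: Tg_inj.
split; first by rewrite TsetE.
split; first exact: subTT.
split; first exact: sig_inj.
split; first exact: sigE.
split; first exact: tau_inj.
split; first exact: tauE.
exact: cover_iff.
Qed.
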